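(* Let $\mathcal M$ be a finite polyptych lattice over $F$ with canonical semialgebra $S_{\mathcal M}$. Restriction to $\mathcal M\subseteq S_{\mathcal M}$ gives a bijection between the set of $F_{\ge0}$-semialgebra morphisms $\tilde p:(S_{\mathcal M},\oplus,\star)\to(F\cup\{\infty\},\min,+)$ that take finite values on $S_{\mathcal M}\setminus\{\infty\}$, and the set $\mathrm{Sp}(\mathcal M)$ of points of $\mathcal M$. The inverse sends $p$ to $\tilde p(\bigoplus_{m\in S}m)=\min_{m\in S}p(m)$, $\tilde p(\infty)=\infty$.
   Context: Fix a subring $F$ with $\mathbb Z\subseteq F\subseteq\mathbb R$. A polyptych lattice of rank $r$ over $F$ is a collection $\{M_\alpha\}_{\alpha\in I}$ of free $F$-modules of rank $r$ with piecewise $F$-linear maps (continuous and $F$-linear on each cone of some complete $F$-rational fan) $\mu_{\alpha,\beta}:M_\alpha\to M_\beta$ with $\mu_{\alpha,\alpha}=\mathrm{id}$, $\mu_{\alpha,\beta}=\mu_{\beta,\alpha}^{-1}$, $\mu_{\beta,\gamma}\circ\mu_{\alpha,\beta}=\mu_{\alpha,\gamma}$; finite if $I$ is finite. Elements are classes of $\bigsqcup M_\alpha$ under $m_\alpha\sim\mu_{\alpha,\beta}(m_\alpha)$; $\pi_\alpha$ the chart maps; $\mathcal M_{\mathbb R}$ has charts $M_\alpha\otimes\mathbb R$; $m+_\alpha m':=\pi_\alpha^{-1}(\pi_\alpha(m)+\pi_\alpha(m'))$; $\lambda m:=\pi_\alpha^{-1}(\lambda\pi_\alpha(m))$ ($\lambda\ge0$).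 A point is $p:\mathcal M\to F$ with $p(m)+p(m')=\min_\alpha p(m+_\alpha m')$ and $p(\lambda m)=\lambda p(m)$ ($\lambda\in F_{\ge0}$); $\mathrm{Sp}(\mathcal M)$ is the set of points; points extend continuously to $\mathcal M_{\mathbb R}$. PL half-space: $\mathcal H_{p,a}=\{m\in\mathcal M_{\mathbb R}:p(m)\ge a\}$; $\mathrm{p\text{-}conv}_F(S)=\bigcap\{\mathcal H_{p,a}:p\in\mathrm{Sp}(\mathcal M),a\in F,S\subseteq\mathcal H_{p,a}\}$. The canonical semialgebra $S_{\mathcal M}$: the free commutative idempotent semigroup (operation $\oplus$) on elements of $\mathcal M$ modulo $\bigoplus_{m\in S}m=\bigoplus_{m\in S'}m$ whenever $S,S'\subseteq\mathcal M$ are finite with $\mathrm{p\text{-}conv}_F(S)=\mathrm{p\text{-}conv}_F(S')$, with an adjoined additive identity $\infty$; product $m\star m':=\bigoplus_{\alpha\in I}(m+_\alpha m')$, $m\star\infty=\infty$, extended distributively; $F_{\ge0}$-action $\lambda\cdot\bigoplus_{m\in S}m=\bigoplus_{m\in S}\lambda m$, $\lambda\cdot\infty=\infty$ for $\lambda>0$, $0\cdot\infty=0_{\mathcal M}$ (the element whose chart representatives are all $0$, which is the $\star$-identity). $(F\cup\{\infty\},\min,+)$ carries the usual $F_{\ge0}$-scaling. An $F_{\ge0}$-semialgebra morphism preserves $\oplus$ (to $\min$), $\star$ (to $+$), identities and the $F_{\ge0}$-action. *)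

(* Defs.v *)
From HB Require Import structures.
From Stdlib Require Import List.
From mathcomp Require Import all_boot all_order all_algebra.
From mathcomp Require Import all_classical all_reals all_analysis.
Set Implicit Arguments. Unset Strict Implicit. Unset Printing Implicit Defensive.
Import Order.TTheory GRing.Theory Num.Theory.
Import numFieldTopology.Exports.
Local Open Scope ring_scope.

Section PolyptychDefs.
Variables (R : realType) (F : {pred R}) (r : nat).
Local Notation vec := 'rV[R]_r.

(* F-points of the chart R^r (= M_alpha viewed inside M_alpha ⊗ R) *)
Definition Fvec (v : vec) : Prop := forall i, v ord0 i \in F.
Definition Fmx (A : 'M[R]_r) : Prop := forall i j, A i j \in F.

Definition cone (us : seq vec) (x : vec) : Prop :=
  forall u, u \in us -> 0 <= (x *m u^T) ord0 ord0.

Definition pwFlinear (f : vec -> vec) : Prop :=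
  exists pieces : seq (seq vec * 'M[R]_r),
    (forall x, exists2 c, c \in pieces & cone c.1 x) /\
    (forall c, c \in pieces ->
       (forall u, u \in c.1 -> Fvec u) /\ Fmx c.2 /\
       (forall x, cone c.1 x -> f x = x *m c.2)).

Variables (I : finType) (mu : I -> I -> vec -> vec).

Definition polyptych : Prop :=
  (forall a b, pwFlinear (mu a b)) /\
  (forall a x, mu a a x = x) /\
  (forall a b x, mu b a (mu a b x) = x) /\
  (forall a b c x, mu b c (mu a b x) = mu a c x).

(* elements of M_R: compatible families of chart representatives *)
Definition isMR (m : I -> vec) : Prop := forall a b, m b = mu a b (m a).
Definition isM (m : I -> vec) : Prop := isMR m /\ forall a, Fvec (m a).

Definition chartinv (a : I) (v : vec) : I -> vec := fun b => mu a b v.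
Definition addM (a : I) (m m' : I -> vec) : I -> vec := chartinv a (m a + m' a).
Definition scaleM (a : I) (l : R) (m : I -> vec) : I -> vec := chartinv a (l *: m a).
Definition zeroM : I -> vec := fun _ => 0.

Definition isPoint (p : (I -> vec) -> R) : Prop :=
  (forall m, isM m -> p m \in F) /\
  (forall m m', isM m -> isM m' ->
     (forall a, p m + p m' <= p (addM a m m')) /\
     (exists a, p (addM a m m') = p m + p m')) /\
  (forall a l m, isM m -> l \in F -> 0 <= l -> p (scaleM a l m) = l * p m).

Definition isExt (p pR : (I -> vec) -> R) : Prop :=
  (forall m, isM m -> pR m = p m) /\
  (forall a, continuous (fun v : vec => pR (chartinv a v))) /\
  (forall a l m, isMR m -> 0 <= l -> pR (scaleM a l m) = l * pR m).

Definition in_pconv (S : seq (I -> vec)) (x : I -> vec) : Prop :=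
  forall p pR (c : R), isPoint p -> isExt p pR -> c \in F ->
    (forall m, In m S -> c <= p m) -> c <= pR x.

Definition pconv_eq (S T : seq (I -> vec)) : Prop :=
  forall x, isMR x -> (in_pconv S x <-> in_pconv T x).

(* Representatives of S_M: None = infinity, Some S = (+)_{m in S} m *)
Definition Rep := option (seq (I -> vec)).

Definition validRep (o : Rep) : Prop :=
  match o with
  | None => True
  | Some s => s <> [::] /\ forall m, In m s -> isM m
  end.

Definition repEq (o o' : Rep) : Prop :=
  match o, o' with
  | None, None => True
  | Some s, Some t => pconv_eq s t
  | _, _ => False
  end.

Definition oplusR (o o' : Rep) : Rep :=
  match o, o' with
  | None, x => x
  | x, None => x
  | Some s, Some t => Some (s ++ t)
  end.

Definition starR (o o' : Rep) : Rep :=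
  match o, o' with
  | Some s, Some t =>
      Some (flatten [seq [seq addM a m m' | m' <- t, a <- enum I] | m <- s])
  | _, _ => None
  end.

Definition oneR : Rep := Some [:: zeroM].

Definition actR (a : I) (l : R) (o : Rep) : Rep :=
  match o with
  | Some s => Some [seq scaleM a l m | m <- s]
  | None => if l == 0 then oneR else None
  end.

(* (F ∪ {oo}, min, +) with None = oo *)
Definition minE (x y : option R) : option R :=
  match x, y with
  | None, z => z
  | z, None => z
  | Some u, Some v => Some (Num.min u v)
  end.
Definition addE (x y : option R) : option R :=
  match x, y with Some u, Some v => Some (u + v) | _, _ => None end.
Definition actE (l : R) (x : option R) : option R :=
  match x with Some u => Some (l * u) | None => if l == 0 then Some 0 else None end.

(* F_{>=0}-semialgebra morphisms S_M -> F ∪ {oo}, finite on S_M \ {oo};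
   given as functions on representatives that respect the relation *)
Definition isMorph (f : Rep -> option R) : Prop :=
  (forall o o', validRep o -> validRep o' -> repEq o o' -> f o = f o') /\
  (forall s, validRep (Some s) -> exists2 v, f (Some s) = Some v & v \in F) /\
  (forall o o', validRep o -> validRep o' -> f (oplusR o o') = minE (f o) (f o')) /\
  f None = None /\
  (forall o o', validRep o -> validRep o' -> f (starR o o') = addE (f o) (f o')) /\
  f oneR = Some 0 /\
  (forall a l o, validRep o -> l \in F -> 0 <= l -> f (actR a l o) = actE l (f o)).

Definition restr (f : Rep -> option R) (m : I -> vec) : R := odflt 0 (f (Some [:: m])).

End PolyptychDefs.

(* Main.v *)
Require Import Defs.
From HB Require Import structures.
From Stdlib Require Import List.
From mathcomp Require Import all_boot all_order all_algebra.
From mathcomp Require Import all_classical all_reals all_analysis.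
From mathcomp Require Import lra.
Import Order.TTheory GRing.Theory Num.Theory.
Import numFieldTopology.Exports.
Local Open Scope classical_set_scope.
Local Open Scope ring_scope.
Set Implicit Arguments. Unset Strict Implicit.


Section Basics.
Variables (R : realType) (F : {pred R}) (HF : subring_closed F).

Lemma F1 : 1 \in F. Proof. by case: HF. Qed.
Lemma FB x y : x \in F -> y \in F -> x - y \in F. Proof. by case: HF => _ h _; apply: h. Qed.
Lemma FM x y : x \in F -> y \in F -> x * y \in F. Proof. by case: HF => _ _ h; apply: h. Qed.
Lemma F0 : 0 \in F. Proof. by rewrite -(subrr 1) FB ?F1. Qed.
Lemma FN x : x \in F -> - x \in F. Proof. by move=> h; rewrite -sub0r FB ?F0. Qed.
Lemma FD x y : x \in F -> y \in F -> x + y \in F.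
Proof. by move=> hx hy; rewrite -(opprK y) FB ?FN. Qed.
Lemma Fn n : n%:R \in F.
Proof. by elim: n => [|n IH]; rewrite ?F0 // -addn1 natrD FD ?F1. Qed.
Lemma Fabs x : x \in F -> `|x| \in F.
Proof. by move=> h; case: (ler0P x) => _; rewrite ?FN. Qed.
Lemma Fsum (T : Type) (s : seq T) (f : T -> R) :
  (forall i, f i \in F) -> \sum_(i <- s) f i \in F.
Proof.
move=> h; elim: s => [|a s IH]; first by rewrite big_nil F0.
by rewrite big_cons FD.
Qed.
End Basics.


Section PW.
Variables (R : realType) (F : {pred R}) (HF : subring_closed F) (r : nat).
Local Notation vec := 'rV[R]_r.
Variable (f : vec -> vec) (Hf : pwFlinear F f).

Lemma pw_at x : exists A : 'M[R]_r, Fmx F A /\ f x = x *m A.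
Proof.
case: Hf => pc [cov hp]; case: (cov x) => c cin cx.
case: (hp c cin) => _ [FA fe]; exists c.2; split => //; exact: fe.
Qed.

Lemma pw0 : f 0 = 0.
Proof. by case: (pw_at 0) => A [_ ->]; rewrite mul0mx. Qed.

Lemma pwF x : Fvec F x -> Fvec F (f x).
Proof.
move=> Fx; case: (pw_at x) => A [FA ->] j; rewrite mxE.
apply: Fsum => // k; apply: FM => //.
Qed.

Lemma pwZ l x : 0 <= l -> f (l *: x) = l *: f x.
Proof.
move=> l0; case: Hf => pc [cov hp]; case: (cov x) => c cin cx.
case: (hp c cin) => _ [FA fe].
rewrite fe ?fe // ?scalemxAl // => u uin.
by rewrite -scalemxAl mxE mulr_ge0 // cx.
Qed.
End PW.


Section Norms.
Variables (R : realType) (m n : nat).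

Lemma entry_le (M : 'M[R]_(m, n)) i j : `|M i j| <= `|M|.
Proof.
have /mapP[k Hk ->] : `|M i j| \in [seq `|M x.1 x.2| | x : 'I_m * 'I_n].
  by apply/mapP; exists (i, j) => //=; rewrite mem_enum.
by rewrite [leRHS]/Num.Def.normr /= mx_normrE; apply/bigmax_geP; right => /=; exists k.
Qed.

Lemma norm_le_entries (M : 'M[R]_(m, n)) c : 0 <= c ->
  (forall i j, `|M i j| <= c) -> `|M| <= c.
Proof.
move=> c0 h; rewrite [leLHS]/Num.Def.normr /= mx_normrE (bigmax_le _ c0) //= => -[i j] _.
Qed.
End Norms.

Section Norms2.
Variables (R : realType) (r : nat).
Local Notation vec := 'rV[R]_r.

Definition Kmx (A : 'M[R]_r) : R := \sum_k \sum_j `|A k j|.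

Lemma Kmx_ge0 A : 0 <= Kmx A.
Proof. by apply: sumr_ge0 => k _; apply: sumr_ge0. Qed.

Lemma mulmx_norm (x : vec) A : `|x *m A| <= Kmx A * `|x|.
Proof.
apply: norm_le_entries; first by rewrite mulr_ge0 // Kmx_ge0.
move=> i j; rewrite mxE (le_trans (ler_norm_sum _ _ _)) //.
rewrite /Kmx mulr_suml; apply: ler_sum => k _.
rewrite normrM mulrC; apply: ler_pM => //.
  rewrite (bigD1 j) //= lerDl; exact: sumr_ge0.
by rewrite (ord1 i); apply: entry_le.
Qed.

Lemma inner_norm (x : vec) (u : vec) :
  `|(x *m u^T) ord0 ord0| <= (\sum_k `|u ord0 k|) * `|x|.
Proof.
rewrite mxE (le_trans (ler_norm_sum _ _ _)) // mulr_suml; apply: ler_sum => k _.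
rewrite normrM mulrC mxE; apply: ler_pM => //; exact: entry_le.
Qed.
End Norms2.


Section Cont.
Variables (R : realType) (V W : normedModType R).

Lemma loclip_cont (f : V -> W) x d K : 0 < d -> 0 <= K ->
  (forall y, `|x - y| < d -> `|f x - f y| <= K * `|x - y|) -> f @ x --> f x.
Proof.
move=> d0 K0 h; apply/cvgrPdist_lt => e e0; apply/nbhs_normP.
have K1 : 0 < K + 1 by rewrite ltr_wpDl.
exists (Num.min d (e / (K + 1))); first by rewrite /= lt_min d0 divr_gt0.
move=> y /=; rewrite lt_min => /andP[yd ye].
apply: le_lt_trans (h _ yd) _.
have : K * `|x - y| <= K * (e / (K + 1)) by apply: ler_wpM2l => //; apply: ltW.
move/le_lt_trans; apply.
rewrite mulrA ltr_pdivrMr // mulrC ltr_pM2l // ?ltrDl //.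
Qed.
End Cont.


Section PWC.
Variables (R : realType) (r : nat).
Local Notation vec := 'rV[R]_r.

Lemma cone_nbhd (us : seq vec) x : ~ cone us x ->
  exists2 d, 0 < d & forall y, `|x - y| < d -> ~ cone us y.
Proof.
move=> ncx.
case: (pselect (exists u, u \in us /\ (x *m u^T) ord0 ord0 < 0)); last first.
  move=> nex; exfalso; apply: ncx => u uin; rewrite leNgt; apply/negP => h.
  by apply: nex; exists u.
move=> [u [uin a0]].
set a := (x *m u^T) ord0 ord0 in a0 *.
set S := \sum_k `|u ord0 k|.
have S0 : 0 <= S by apply: sumr_ge0.
exists (- a / (S + 1)); first by rewrite divr_gt0 ?oppr_gt0 // ltr_wpDl.
move=> y xy cy; have := cy u uin.
have -> : y *m u^T = x *m u^T - (x - y) *m u^T by rewrite mulmxBl opprB addrC subrK.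
have -> : (x *m u^T - (x - y) *m u^T) ord0 ord0 = a - ((x - y) *m u^T) ord0 ord0.
  by rewrite /a !mxE.
move=> h.
have h1 := inner_norm (x - y) u; rewrite -/S in h1.
have h2 : S * `|x - y| <= S * (- a / (S + 1)) by apply: ler_wpM2l => //; apply: ltW.
have h3 : S * (- a / (S + 1)) < - a.
  rewrite mulrA ltr_pdivrMr ?ltr_wpDl // mulrC ltr_pM2l ?ltrDl // oppr_gt0 //.
set b := ((x - y) *m u^T) ord0 ord0 in h h1.
have hb : `|b| < - a by apply: le_lt_trans h1 (le_lt_trans h2 h3).
have : - b < - a by apply: le_lt_trans hb; rewrite -normrN ler_norm.
rewrite ltrN2 => ab; move: h; rewrite subr_ge0 => ba.
by move: (le_lt_trans ba ab); rewrite ltxx.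
Qed.

Lemma pieces_nbhd (pc : seq (seq vec * 'M[R]_r)) x :
  exists2 d, 0 < d & forall y, `|x - y| < d ->
    forall c, c \in pc -> cone c.1 y -> cone c.1 x.
Proof.
elim: pc => [|c pc [d d0 IH]]; first by exists 1 => // y _ c; rewrite in_nil.
case: (pselect (cone c.1 x)) => cx.
  exists d => // y yd c'; rewrite in_cons => /orP[/eqP -> //|]; exact: IH.
case: (cone_nbhd cx) => d' d'0 h.
exists (Num.min d d'); first by rewrite /= lt_min d0 d'0.
move=> y; rewrite /= lt_min => /andP[yd yd'] c'; rewrite in_cons => /orP[/eqP -> cy|].
  by exfalso; apply: (h y yd' cy).
exact: IH.
Qed.

Variables (F : {pred R}) (f : vec -> vec) (Hf : pwFlinear F f).

Lemma pw_cont : continuous f.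
Proof.
move=> x; case: Hf => pc [cov hp].
case: (pieces_nbhd pc x) => d d0 hn.
pose K := \sum_(c <- pc) Kmx c.2.
have K0 : 0 <= K by apply: sumr_ge0 => c _; apply: Kmx_ge0.
apply: (@loclip_cont _ _ _ f x d K) => // y xy.
case: (cov y) => c cin cy.
have cx := hn y xy c cin cy.
case: (hp c cin) => _ [_ fe].
rewrite (fe _ cx) (fe _ cy) -mulmxBl.
apply: le_trans (mulmx_norm _ _) _; apply: ler_wpM2r => //.
by rewrite /K (big_rem c cin) /= lerDl; apply: sumr_ge0 => c' _; apply: Kmx_ge0.
Qed.
End PWC.


Section FV.
Variables (R : realType) (F : {pred R}) (HF : subring_closed F) (r : nat).
Local Notation vec := 'rV[R]_r.
Lemma Fvec0 : Fvec F (0 : vec). Proof. by move=> i; rewrite mxE F0. Qed.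
Lemma FvecD (v w : vec) : Fvec F v -> Fvec F w -> Fvec F (v + w).
Proof. by move=> hv hw i; rewrite mxE FD. Qed.
Lemma FvecN (v : vec) : Fvec F v -> Fvec F (- v).
Proof. by move=> hv i; rewrite mxE FN. Qed.
Lemma FvecB (v w : vec) : Fvec F v -> Fvec F w -> Fvec F (v - w).
Proof. by move=> hv hw; apply: FvecD => //; apply: FvecN. Qed.
Lemma FvecZ l (v : vec) : l \in F -> Fvec F v -> Fvec F (l *: v).
Proof. by move=> hl hv i; rewrite mxE FM. Qed.
Lemma Fvec_delta j : Fvec F (delta_mx 0 j : vec).
Proof. by move=> i; rewrite mxE Fn. Qed.
Lemma Fvec_sum (T : Type) (s : seq T) (h : T -> vec) :
  (forall k, Fvec F (h k)) -> Fvec F (\sum_(k <- s) h k).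
Proof.
move=> hh; elim: s => [|a s IH]; first by rewrite big_nil; apply: Fvec0.
by rewrite big_cons; apply: FvecD.
Qed.
End FV.

Section Charts.
Variables (R : realType) (F : {pred R}) (HF : subring_closed F) (r : nat).
Local Notation vec := 'rV[R]_r.
Variables (I : finType) (mu : I -> I -> vec -> vec) (Hmu : polyptych F mu).

Lemma muF a b v : Fvec F v -> Fvec F (mu a b v).
Proof. by case: Hmu => hp _; apply: pwF. Qed.
Lemma mu_id a v : mu a a v = v. Proof. by case: Hmu => _ [h _]. Qed.
Lemma mu_comp a b c v : mu b c (mu a b v) = mu a c v.
Proof. by case: Hmu => _ [_ [_ h]]. Qed.
Lemma mu0 a b : mu a b 0 = 0. Proof. by case: Hmu => hp _; apply: pw0. Qed.
Lemma muZ a b l v : 0 <= l -> mu a b (l *: v) = l *: mu a b v.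
Proof. by case: Hmu => hp _; apply: pwZ. Qed.
Lemma mu_cont a b : continuous (mu a b).
Proof. by case: Hmu => hp _; apply: pw_cont. Qed.

Lemma isMR_chartinv a v : isMR mu (chartinv mu a v).
Proof. by move=> a' b; rewrite /chartinv mu_comp. Qed.
Lemma isM_chartinv a v : Fvec F v -> isM F mu (chartinv mu a v).
Proof. by move=> hv; split; [apply: isMR_chartinv | move=> b; apply: muF]. Qed.
Lemma chartinvK a m : isMR mu m -> chartinv mu a (m a) = m.
Proof. by move=> hm; apply: funext => b; rewrite /chartinv -hm. Qed.
Lemma chartinv_at a v : chartinv mu a v a = v.
Proof. exact: mu_id. Qed.
Lemma isMR_isM m : isM F mu m -> isMR mu m. Proof. by case. Qed.
Lemma zeroM_isM : isM F mu (@zeroM R r I).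
Proof. by split; [move=> a b; rewrite /zeroM mu0 | move=> a; apply: Fvec0]. Qed.
Lemma addM_isM a m m' : isM F mu m -> isM F mu m' -> isM F mu (addM mu a m m').
Proof.
move=> [_ hm] [_ hm']; apply: isM_chartinv; apply: FvecD => //.
Qed.
Lemma scaleM_isM a l m : l \in F -> isM F mu m -> isM F mu (scaleM mu a l m).
Proof. by move=> hl [_ hm]; apply: isM_chartinv; apply: FvecZ. Qed.
End Charts.


Section Ext.
Variables (R : realType) (F : {pred R}) (HF : subring_closed F) (r : nat).
Local Notation vec := 'rV[R]_r.
Variables (I : finType) (mu : I -> I -> vec -> vec) (Hmu : polyptych F mu).
Variables (p : (I -> vec) -> R) (Hp : isPoint F mu p) (a0 : I).

Definition g (v : vec) := p (chartinv mu a0 v).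

Lemma gF v : Fvec F v -> g v \in F.
Proof. by move=> hv; case: Hp => h _; apply: h; apply: isM_chartinv. Qed.

Lemma gD v w : Fvec F v -> Fvec F w -> g v + g w <= g (v + w).
Proof.
move=> hv hw; case: Hp => _ [h _].
have [h1 _] := h _ _ (isM_chartinv HF Hmu a0 hv) (isM_chartinv HF Hmu a0 hw).
by have := h1 a0; rewrite /addM !(chartinv_at Hmu).
Qed.

Lemma gZ l v : l \in F -> 0 <= l -> Fvec F v -> g (l *: v) = l * g v.
Proof.
move=> hl l0 hv; case: Hp => _ [_ h].
by rewrite -(h a0 l _ (isM_chartinv HF Hmu a0 hv) hl l0) /scaleM (chartinv_at Hmu).
Qed.

Lemma g0 : g 0 = 0.
Proof.
have := gZ (F0 HF) (lexx 0) (@Fvec0 _ _ HF r); rewrite scale0r mul0r //.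
Qed.

Local Notation e j := (delta_mx 0 j : vec).
Definition Lc := \sum_j (`|g (e j)| + `|g (- e j)|).

Lemma Lc_ge0 : 0 <= Lc.
Proof. by apply: sumr_ge0 => j _; apply: addr_ge0. Qed.

Lemma gsum (T : Type) (s : seq T) h : (forall k, Fvec F (h k)) ->
  \sum_(k <- s) g (h k) <= g (\sum_(k <- s) h k).
Proof.
move=> hh; elim: s => [|a s IH]; first by rewrite !big_nil g0.
rewrite !big_cons; apply: le_trans (gD (hh a) (Fvec_sum HF _ hh)).
by rewrite lerD2l.
Qed.

Lemma gterm c j : c \in F -> - (`|c| * (`|g (e j)| + `|g (- e j)|)) <= g (c *: e j).
Proof.
move=> hc; have h1 := ler_norm (g (e j)); have h2 := ler_norm (g (- e j)).
have h1' : - `|g (e j)| <= g (e j) by rewrite lerNl -normrN ler_norm.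
have h2' : - `|g (- e j)| <= g (- e j) by rewrite lerNl -normrN ler_norm.
have n1 := normr_ge0 (g (e j)); have n2 := normr_ge0 (g (- e j)).
case: (lerP 0 c) => c0.
  rewrite gZ //; last exact: (Fvec_delta HF).
  rewrite ger0_norm //; nra.
have -> : c *: e j = (- c) *: (- e j) by rewrite scaleNr scalerN opprK.
have hc' : - c \in F := FN HF hc.
have c0' : 0 <= - c by lra.
rewrite gZ //; last by apply: (FvecN HF); apply: (Fvec_delta HF).
rewrite ltr0_norm //; nra.
Qed.

Lemma glb v : Fvec F v -> - (Lc * `|v|) <= g v.
Proof.
move=> hv; rewrite {2}(row_sum_delta v).
apply: le_trans (gsum _ _); last by move=> j; apply: (FvecZ HF) => //; apply: (Fvec_delta HF).
rewrite /Lc mulr_suml -sumrN; apply: ler_sum => j _.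
apply: le_trans (gterm _ (hv j)).
rewrite lerN2 [leRHS]mulrC; apply: ler_wpM2r; first by apply: addr_ge0.
by have := entry_le v 0 j.
Qed.

Lemma glip v w : Fvec F v -> Fvec F w -> g v - g w <= Lc * `|v - w|.
Proof.
move=> hv hw; have h := gD hv (FvecB HF hw hv); have ee : v + (w - v) = w by rewrite addrC subrK.
rewrite ee in h.
have := glb (FvecB HF hw hv); rewrite distrC; move: h; lra.
Qed.

Lemma grat (a b : nat) v w : (0 < b)%N -> Fvec F v -> Fvec F w ->
  g v - (a%:R / b%:R) * g w <= Lc * `|v - (a%:R / b%:R) *: w|.
Proof.
move=> b0 hv hw.
have B0 : 0 < b%:R :> R by rewrite ltr0n.
have h := glip (FvecZ HF (Fn HF b) hv) (FvecZ HF (Fn HF a) hw).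
rewrite !gZ ?Fn ?ler0n // in h.
rewrite -(ler_pM2l B0).
have e1 : b%:R * (g v - a%:R / b%:R * g w) = b%:R * g v - a%:R * g w.
  by rewrite mulrBr mulrA mulrCA divff ?mulr1 // gt_eqF.
have e2 : b%:R *: (v - a%:R / b%:R *: w) = b%:R *: v - a%:R *: w.
  by rewrite scalerBr scalerA mulrCA divff ?mulr1 // gt_eqF.
have e3 : b%:R * `|v - a%:R / b%:R *: w| = `|b%:R *: v - a%:R *: w|.
  by rewrite -e2 normrZ ger0_norm // ltW.
rewrite e1 mulrCA e3.
exact: h.
Qed.

Lemma greal t v w : 0 < t -> Fvec F v -> Fvec F w ->
  g v <= t * g w + Lc * `|v - t *: w|.
Proof.
move=> t0 hv hw.
set K := `|g w| + Lc * `|w|.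
have K0 : 0 <= K by apply: addr_ge0 => //; apply: mulr_ge0 => //; apply: Lc_ge0.
have Lc0 := Lc_ge0.
apply/ler_addgt0Pr => e e0.
pose b := (Num.truncn (K / e)).+1.
pose a := (Num.truncn (t * b%:R)).+1.
have b0 : (0 < b)%N by [].
have B0 : 0 < b%:R :> R by rewrite ltr0n.
have hKb : K / e < b%:R by apply: truncnS_gt.
have hKb' : K < b%:R * e by rewrite -ltr_pdivrMr // mulrC.
have ha1 : t * b%:R < a%:R by apply: truncnS_gt.
have ha2 : a%:R <= t * b%:R + 1.
  have := truncn_itv (ltW (mulr_gt0 t0 B0)) => /andP[h1 _].
  by rewrite /a -addn1 natrD lerD2r.
set q := (a%:R / b%:R : R).
have qb : q * b%:R = a%:R by rewrite /q mulrVK // unitfE gt_eqF.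
set d := q - t.
have d0 : 0 <= d by rewrite /d subr_ge0; rewrite -(ler_pM2r B0) qb ltW.
have db : d * b%:R <= 1 by rewrite /d mulrBl qb; lra.
have dK : d * K <= e.
  have : b%:R * (d * K) <= b%:R * e.
    rewrite mulrA [b%:R * d]mulrC; apply: le_trans (ltW hKb').
    by rewrite ler_piMl.
  by rewrite ler_pM2l.
have hq : g v - q * g w <= Lc * `|v - q *: w| := grat a b0 hv hw.
have hn : `|v - q *: w| <= `|v - t *: w| + d * `|w|.
  have -> : v - q *: w = (v - t *: w) + (- d) *: w.
    by rewrite /d opprB scalerBl addrA subrK.
  by apply: le_trans (ler_normD _ _) _; rewrite normrZ normrN ger0_norm.
have hg : q * g w <= t * g w + d * `|g w|.
  have -> : q = t + d by rewrite /d addrC subrK.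
  by rewrite mulrDl lerD2l; apply: ler_wpM2l => //; apply: ler_norm.
have : g v <= t * g w + Lc * `|v - t *: w| + d * K.
  apply: le_trans (_ : q * g w + Lc * `|v - q *: w| <= _); first by lra.
  rewrite /K mulrDr -addrA [d * (Lc * _)]mulrCA.
  have := ler_wpM2l Lc0 hn; rewrite mulrDr; lra.
lra.
Qed.

Definition Sset (v : vec) : set R :=
  [set z | exists w t, Fvec F w /\ 0 < t /\ z = t * g w + Lc * `|v - t *: w|].
Definition Gx (v : vec) := inf (Sset v).

Lemma Sne v : Sset v (Lc * `|v|).
Proof.
exists 0, 1; split; first exact: (Fvec0 HF).
by split => //; rewrite g0 mulr0 add0r scaler0 subr0.
Qed.

Lemma Slb v : lbound (Sset v) (- (Lc * `|v|)).
Proof.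
move=> z [w [t [hw [t0 ->]]]].
have Lc0 := Lc_ge0.
have h1 := glb hw.
have h2 : `|t *: w| <= `|v| + `|v - t *: w|.
  have := ler_normB v (v - t *: w).
  by have -> : v - (v - t *: w) = t *: w by rewrite opprB addrC subrK.
rewrite normrZ gtr0_norm // in h2.
have h3 := ler_wpM2l Lc0 h2.
have h4 : - (t * (Lc * `|w|)) <= t * g w.
  by rewrite -mulrN; apply: ler_wpM2l => //; apply: ltW.
rewrite mulrDr in h3; nra.
Qed.

Lemma G_le v z : Sset v z -> Gx v <= z.
Proof. by move=> hz; apply: ge_inf => //; exists (- (Lc * `|v|)); apply: Slb. Qed.

Lemma G_ge v c : (forall z, Sset v z -> c <= z) -> c <= Gx v.
Proof. by move=> h; apply: lb_le_inf => //; exists (Lc * `|v|); apply: Sne. Qed.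

Lemma GE v : Fvec F v -> Gx v = g v.
Proof.
move=> hv; apply/le_anti/andP; split.
  apply: G_le; exists v, 1; do 2 split => //.
  by rewrite mul1r scale1r subrr normr0 mulr0 addr0.
by apply: G_ge => z [w [t [hw [t0 ->]]]]; apply: greal.
Qed.

Lemma Glip v v' : Gx v' <= Gx v + Lc * `|v - v'|.
Proof.
rewrite -lerBlDr; apply: G_ge => z [w [t [hw [t0 ->]]]].
rewrite lerBlDr.
apply: le_trans (G_le (_ : Sset v' (t * g w + Lc * `|v' - t *: w|))) _.
  by exists w, t.
rewrite -addrA lerD2l -mulrDr; apply: ler_wpM2l; first exact: Lc_ge0.
have -> : v' - t *: w = (v - t *: w) - (v - v') by rewrite opprB [RHS]addrC [RHS]addrA subrK.
exact: ler_normB.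
Qed.

Lemma GZle l v : 0 < l -> Gx (l *: v) <= l * Gx v.
Proof.
move=> l0; rewrite -ler_pdivrMl //; apply: G_ge => z [w [t [hw [t0 ->]]]].
rewrite ler_pdivrMl //.
apply: G_le; exists w, (l * t); split => //; split; first by apply: mulr_gt0.
rewrite mulrDr mulrA mulrCA -scalerA -scalerBr normrZ gtr0_norm //.
Qed.

Lemma GZ l v : 0 <= l -> Gx (l *: v) = l * Gx v.
Proof.
rewrite le0r => /orP[/eqP -> | l0].
  by rewrite scale0r mul0r GE ?g0 //; apply: (Fvec0 HF).
apply/le_anti/andP; split; first exact: GZle.
have li : 0 < l^-1 by rewrite invr_gt0.
have := GZle (l *: v) li; rewrite scalerA mulVf ?gt_eqF // scale1r.
by rewrite -(ler_pM2l l0) mulrA divff ?gt_eqF // mul1r.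
Qed.

Lemma G_cont : continuous Gx.
Proof.
move=> x; apply: (@loclip_cont _ _ _ Gx x 1 Lc) => //; first exact: Lc_ge0.
move=> y _; rewrite ler_norml; apply/andP; split.
  by rewrite lerNl opprB lerBlDl; apply: Glip.
by rewrite lerBlDl distrC; apply: Glip.
Qed.

Definition pR (m : I -> vec) := Gx (m a0).

Lemma pR_ext : isExt F mu p pR.
Proof.
split; [|split].
- move=> m [hm hF]; rewrite /pR GE //.
  by rewrite /g chartinvK.
- move=> a x; rewrite /pR.
  exact: (@continuous_comp _ _ _ (mu a a0) Gx x (@mu_cont _ _ _ _ mu Hmu a a0 x) (@G_cont (mu a a0 x))).
- move=> a l m hm l0; rewrite /pR /scaleM /chartinv (muZ Hmu) // -hm.
  exact: GZ.
Qed.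

Lemma pconv_le s t c : (forall m, In m t -> isM F mu m) -> pconv_eq F mu s t ->
  c \in F -> (forall m, In m s -> c <= p m) -> forall m, In m t -> c <= p m.
Proof.
move=> ht hst hc hs m mt.
have hmt : in_pconv F mu t m.
  move=> p' pR' c' hp' [e1 _] _ hc'; rewrite e1; [exact: hc' | exact: ht].
have := (hst m (isMR_isM (ht m mt))).2 hmt p pR c Hp pR_ext hc hs.
by case: pR_ext => e1 _; rewrite e1 //; apply: ht.
Qed.
End Ext.


Section Lists.
Variables (T U : Type).
Lemma In_flatten (x : T) (ss : seq (seq T)) :
  In x (flatten ss) <-> exists s, In s ss /\ In x s.
Proof.
elim: ss => [|s ss IH] /=; first by split=> // -[s []].
rewrite in_app_iff IH; split.
  by case=> [h|[s' [h1 h2]]]; [exists s; split; [left|] | exists s'; split; [right|]].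
by case=> s' [[<-|h1] h2]; [left | right; exists s'].
Qed.

Lemma In_map (f : U -> T) x (s : seq U) :
  In x (map f s) <-> exists y, In y s /\ x = f y.
Proof.
elim: s => [|y s IH] /=; first by split=> // -[y []].
rewrite IH; split.
  by case=> [<-|[y' [h1 ->]]]; [exists y; split; [left|] | exists y'; split; [right|]].
by case=> y' [[<-|h1] ->]; [left | right; exists y'].
Qed.

Lemma In_mem (V : eqType) (x : V) s : x \in s -> In x s.
Proof.
elim: s => [|y s IH] //=; rewrite in_cons => /orP[/eqP ->|h]; [by left|right; exact: IH].
Qed.
End Lists.

Section Mins.
Variables (R : realType) (X : Type) (h : X -> R).

Definition Pmin (s : seq X) (v : R) :=
  (forall m, In m s -> v <= h m) /\ (exists2 m, In m s & v = h m).

Lemma Pmin_uniq s v v' : Pmin s v -> Pmin s v' -> v = v'.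
Proof.
move=> [h1 [m1 i1 e1]] [h2 [m2 i2 e2]]; apply/le_anti/andP; split.
  by rewrite e2; apply: h1.
by rewrite e1; apply: h2.
Qed.

Lemma Pmin_ext s t v : (forall x, In x s <-> In x t) -> Pmin s v -> Pmin t v.
Proof.
move=> e [h1 [m i ev]]; split; first by move=> m' hm; apply: h1; apply/e.
by exists m => //; apply/e.
Qed.

Lemma Pmin1 m : Pmin [:: m] (h m).
Proof. by split; [move=> m' [<-|[]] | exists m => //; left]. Qed.

Lemma Pmin_cat s t a b : Pmin s a -> Pmin t b -> Pmin (s ++ t) (Num.min a b).
Proof.
move=> [ha [ma ia ea]] [hb [mb ib eb]]; split.
  move=> m hm; case: (in_app_or _ _ _ hm) => i; rewrite ge_min; apply/orP; [left|right]; auto.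
case: (leP a b) => _; [exists ma | exists mb] => //; apply: in_or_app; auto.
Qed.

Definition mn (s : seq X) : R :=
  match s with [::] => 0 | m :: s' => foldr (fun m' acc => Num.min (h m') acc) (h m) s' end.

Lemma mnP m s : Pmin (m :: s) (mn (m :: s)).
Proof.
elim: s => [|m' s IH]; first exact: Pmin1.
rewrite /=; apply: (Pmin_ext (s := [:: m'] ++ (m :: s))); last first.
  exact: Pmin_cat (Pmin1 m') IH.
by move=> x /=; tauto.
Qed.
End Mins.

Section Main.
Variables (R : realType) (F : {pred R}) (HF : subring_closed F) (r : nat).
Local Notation vec := 'rV[R]_r.
Variables (I : finType) (HI : (0 < #|I|)%N) (mu : I -> I -> vec -> vec)
  (Hmu : polyptych F mu).

Lemma In_star x s t :
  In x (flatten [seq [seq addM mu a m m' | m' <- t, a <- enum I] | m <- s]) <->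
  exists m m' a, In m s /\ In m' t /\ x = addM mu a m m'.
Proof.
rewrite In_flatten; split.
  move=> [l [/In_map [m [ms ->]] /In_flatten [l' [/In_map [m' [m't ->]] /In_map [a [_ ->]]]]]].
  by exists m, m', a.
move=> [m [m' [a [ms [m't ->]]]]].
exists (flatten [seq [seq addM mu a m m' | a <- enum I] | m' <- t]); split.
  by apply/In_map; exists m.
apply/In_flatten; exists [seq addM mu a m m' | a <- enum I]; split.
  by apply/In_map; exists m'.
by apply/In_map; exists a; split => //; apply: In_mem; rewrite mem_enum.
Qed.

Lemma morph_one f : isMorph F mu f -> forall m, isM F mu m ->
  f (Some [:: m]) = Some (restr f m).
Proof.
move=> [_ [Hfin _]] m hm.
have v1 : validRep F mu (Some [:: m]) by split => // x [<-|[]].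
have [v fv _] := Hfin [:: m] v1.
by rewrite /restr fv.
Qed.

Lemma morph_min f : isMorph F mu f -> forall s, validRep F mu (Some s) ->
  exists v, f (Some s) = Some v /\ Pmin (restr f) s v.
Proof.
move=> Hf; elim=> [|m s IH]; first by case.
move=> [_ hs]; have hm : isM F mu m by apply: hs; left.
case: s IH hs => [|m' s] IH hs.
  by exists (restr f m); split; [apply: morph_one | apply: Pmin1].
have v2 : validRep F mu (Some (m' :: s)) by split => // x hx; apply: hs; right.
have v1 : validRep F mu (Some [:: m]) by split => // x [<-|[]].
case: (IH v2) => w [fw Pw].
have [_ [_ [Hopl _]]] := Hf.
have := Hopl _ _ v1 v2; rewrite /= => ->.
rewrite fw (morph_one Hf hm) /=.
exists (Num.min (restr f m) w); split => //.
exact: (Pmin_cat (Pmin1 _ m) Pw).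
Qed.

Lemma valid1 m : isM F mu m -> validRep F mu (Some [:: m]).
Proof. by move=> hm; split => // x [<-|[]]. Qed.

Lemma validL m m' : isM F mu m -> isM F mu m' ->
  validRep F mu (Some (flatten [seq [seq addM mu a m0 m'0 | m'0 <- [:: m'], a <- enum I] | m0 <- [:: m]])).
Proof.
move=> hm hm'; case/card_gt0P: HI => a0 _; split.
  move=> e; have : In (addM mu a0 m m') (flatten [seq [seq addM mu a m0 m'0 | m'0 <- [:: m'], a <- enum I] | m0 <- [:: m]]).
    by apply/In_star; exists m, m', a0; split; [left|split; [left|]].
  by rewrite e.
move=> x /In_star [m1 [m1' [a [[<-|[]] [[<-|[]] ->]]]]].
exact: addM_isM.
Qed.

Lemma morph_point f : isMorph F mu f -> isPoint F mu (restr f).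
Proof.
move=> Hf; have [_ [Hfin [_ [_ [Hstar [_ Hact]]]]]] := Hf.
split; [|split].
- move=> m hm; have [v fv vF] := Hfin [:: m] (valid1 hm); by rewrite /restr fv.
- move=> m m' hm hm'.
  have [w [fw Pw]] := morph_min Hf (validL hm hm').
  have e := Hstar _ _ (valid1 hm) (valid1 hm').
  rewrite /= fw (morph_one Hf hm) (morph_one Hf hm') /= in e.
  case: e => ew; rewrite -ew.
  case: Pw => h1 [m0 i0 e0]; split.
    move=> a; apply: h1; apply/In_star; exists m, m', a; split; [left|split; [left|]] => //.
  move/In_star: i0 => [m1 [m1' [a [[<-|[]] [[<-|[]] e1]]]]].
  by exists a; rewrite -e1.
- move=> a l m hm hl l0.
  have e := Hact a l (Some [:: m]) (valid1 hm) hl l0.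
  rewrite /= (morph_one Hf hm) (morph_one Hf (scaleM_isM HF Hmu a hl hm)) /= in e.
  by case: e.
Qed.
End Main.

Section Constr.
Variables (R : realType) (F : {pred R}) (HF : subring_closed F) (r : nat).
Local Notation vec := 'rV[R]_r.
Variables (I : finType) (HI : (0 < #|I|)%N) (mu : I -> I -> vec -> vec)
  (Hmu : polyptych F mu) (p : (I -> vec) -> R) (Hp : isPoint F mu p).

Definition fP (o : Rep R r I) : option R :=
  match o with None => None | Some s => Some (mn p s) end.

Lemma mnPs s : s <> [::] -> Pmin p s (mn p s).
Proof. by case: s => // m s _; apply: mnP. Qed.

Lemma p0 (a0 : I) : p (@zeroM R r I) = 0.
Proof.
have [_ [_ hZ]] := Hp.
have := hZ a0 0 _ (zeroM_isM HF Hmu) (F0 HF) (lexx 0); rewrite mul0r.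
suff -> : scaleM mu a0 0 (@zeroM R r I) = @zeroM R r I by [].
by apply: funext => b; rewrite /scaleM /chartinv scale0r (mu0 Hmu).
Qed.

Lemma fP_morph : isMorph F mu fP.
Proof.
case/card_gt0P: HI => a0 _.
have [HpF [HpD HpZ]] := Hp.
split; [|split; [|split; [|split; [|split; [|split]]]]].
- move=> [s|] [t|] //= [ns hs] [nt ht] e; congr Some.
  have [hs1 [ms ims es]] := mnPs ns; have [ht1 [mt imt et]] := mnPs nt.
  have e' : pconv_eq F mu t s by move=> x hx; apply: iff_sym; apply: e.
  apply/le_anti/andP; split.
    rewrite et; apply: (pconv_le HF Hmu Hp a0 ht e) => //.
    by rewrite es; apply: HpF; apply: hs.
  rewrite es; apply: (pconv_le HF Hmu Hp a0 hs e') => //.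
  by rewrite et; apply: HpF; apply: ht.
- move=> s [ns hs]; exists (mn p s) => //.
  have [_ [m i ->]] := mnPs ns; apply: HpF; exact: hs.
- move=> [s|] [t|] //= [ns hs] [nt ht]; congr Some.
  apply: Pmin_uniq (mnPs _) (Pmin_cat (mnPs ns) (mnPs nt)).
  by case: s ns {hs}.
- by [].
- move=> [s|] [t|] //= [ns hs] [nt ht]; congr Some.
  have [hs1 [ms ims es]] := mnPs ns; have [ht1 [mt imt et]] := mnPs nt.
  have [_ [a ea]] := HpD ms mt (hs _ ims) (ht _ imt).
  set L := flatten _.
  have iL : In (addM mu a ms mt) L.
    by apply/In_star; exists ms, mt, a.
  have PL : Pmin p L (mn p s + mn p t).
    split; last by exists (addM mu a ms mt) => //; rewrite ea es et.
    move=> x /In_star [m [m' [a' [im [im' ->]]]]].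
    have [h1 _] := HpD m m' (hs _ im) (ht _ im').
    apply: le_trans (h1 a'); apply: lerD; [exact: hs1 | exact: ht1].
  apply: Pmin_uniq (mnPs _) PL.
  by move=> eL; rewrite eL in iL.
- by rewrite /= (p0 a0).
- move=> a l [s|] vo hl l0 /=.
    congr Some; case: vo => ns hs.
    have [hs1 [ms ims es]] := mnPs ns.
    have PL : Pmin p [seq scaleM mu a l m | m <- s] (l * mn p s).
      split.
        move=> x /In_map [m [im ->]]; rewrite HpZ //; last exact: hs.
        by apply: ler_wpM2l => //; apply: hs1.
      exists (scaleM mu a l ms); first by apply/In_map; exists ms.
      by rewrite HpZ // ?es //; apply: hs.
    apply: Pmin_uniq (mnPs _) PL.
    by move=> /(congr1 size); rewrite size_map => /size0nil; exact: ns.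
  by case: eqP => _ //=; rewrite (p0 a0).
Qed.

Lemma fP_restr m : restr fP m = p m.
Proof. by []. Qed.
End Constr.

Theorem mainTheorem7 (R : realType) (F : {pred R}) (HF : subring_closed F)
  (r : nat) (I : finType) (HI : (0 < #|I|)%N)
  (mu : I -> I -> 'rV[R]_r -> 'rV[R]_r) (Hmu : polyptych F mu) :
  (forall f, isMorph F mu f -> isPoint F mu (restr f)) /\
  (forall p, isPoint F mu p ->
     exists f, isMorph F mu f /\ forall m, isM F mu m -> restr f m = p m) /\
  (forall p f, isPoint F mu p -> isMorph F mu f ->
     (forall m, isM F mu m -> restr f m = p m) ->
     f None = None /\
     forall s, validRep F mu (Some s) ->
       exists v, f (Some s) = Some v /\
         (forall m, In m s -> v <= p m) /\
         (exists2 m, In m s & v = p m)).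
Proof.
split; first by move=> f Hf; apply: (morph_point HF HI Hmu Hf).
split.
  move=> p Hp; exists (fP p); split; first exact: (fP_morph HF HI Hmu Hp).
  by move=> m _; apply: fP_restr.
move=> p f Hp Hf hr; have [_ [_ [_ [HN _]]]] := Hf; split => // s vs.
have [v [fv [h1 [m i e]]]] := morph_min Hf vs.
case: vs => _ hs.
exists v; split => //; split.
  by move=> m' hm'; rewrite -hr; [apply: h1 | apply: hs].
by exists m => //; rewrite -hr //; apply: hs.
Qed.
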